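(* Let $d\ge0$ and let $L:\mathbb{C}_{2d+2}[z,\overline z]\to\mathbb{C}$ be a real linear functional which is non-negative on all real squares, i.e. $L(|f|^2)\ge0$ for all $f\in\mathbb{C}_{d+1}[z,\overline z]$, and which is strictly positive on hermitian squares of bidegree at most $(d,d)$, i.e. $L(|p(z)|^2)>0$ for every nonzero $p\in\mathbb{C}_d[z]$. Let $M=\pi_dM_z|_{A_d}$ and let $\sigma_M(p,q)=\|p\|_L^2+\|Mq\|_L^2+2\Re\langle Mp,q\rangle_L$ on $A_d\oplus A_d$. The following are equivalent: (a) there exist an integer $N\le d+1$, points $a_1,\dots,a_N\in\mathbb{C}$ and weights $c_1,\dots,c_N>0$ such that $$L\big(p(z)\overline{q(z)}\big)=\sum_{k=1}^N c_k\,p(a_k)\overline{q(a_k)}$$ for all $p,q\in\mathbb{C}_{d+1}[z]$ with $\deg p+\deg q\le 2d+1$; (b) the hermitian form $\sigma_M$ is positive semidefinite on all of $A_d\oplus A_d$ (i.e. $\sigma_M$ has no negative eigenvalue, so its only possible non-positive eigenvalue is $0$).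
   Context: Notation: $\mathbb{C}_n[z]$ denotes complex polynomials in $z$ of degree $\le n$; $\mathbb{C}_n[z,\overline z]$ denotes polynomials in $z,\overline z$ of total degree $\le n$. $L$ real means $L(\overline p)=\overline{L(p)}$. $\langle p,q\rangle_L=L(p\overline q)$ and $\|p\|_L^2=L(|p|^2)$. Under the strict positivity hypothesis, $A_d=\mathbb{C}_d[z]$ is a $(d+1)$-dimensional Hilbert space with inner product $\langle\cdot,\cdot\rangle_L$; $A_{d+1}$ is the Hilbert space obtained from $\mathbb{C}_{d+1}[z]$ with the form $\langle\cdot,\cdot\rangle_L$ after quotienting by null vectors, containing $A_d$; $\pi_d$ is the orthogonal projection of $A_{d+1}$ onto $A_d$; $M_z:A_d\to A_{d+1}$ is induced by $p\mapsto zp$, so $M$ is the compression of multiplication by $z$ to $\mathbb{C}_d[z]$. *)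

(* Defs.v *)
(* The complex field is modelled by an arbitrary
   numClosedFieldType C (C = the complex numbers is an instance). *)
From HB Require Import structures.
From mathcomp Require Import all_boot all_order all_algebra.
Set Implicit Arguments. Unset Strict Implicit. Unset Printing Implicit Defensive.
Import Order.TTheory GRing.Theory Num.Theory.
Local Open Scope ring_scope.

Section Defs.
Variable C : numClosedFieldType.

(* A polynomial in z and zbar is an element f : {poly {poly C}} read as
   f = \sum_(i,j) f`_j`_i z^i zbar^j : the outer variable is zbar, the
   inner one is z.  A univariate p(z) : {poly C} is embedded as p%:P. *)

Definition tdeg_le (n : nat) (f : {poly {poly C}}) : Prop :=
  forall i j : nat, (n < i + j)%N -> f`_j`_i = 0.

Definition bconj (f : {poly {poly C}}) : {poly {poly C}} :=
  \poly_(j < (\max_(i < size f) size (f`_i)%R)%N) \poly_(i < size f) (f`_i`_j)^*.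

Definition ipL (L : {poly {poly C}} -> C) (p q : {poly C}) : C :=
  L (p%:P * bconj q%:P).

Definition sqnL (L : {poly {poly C}} -> C) (p : {poly C}) : C := ipL L p p.

(* M is the compression pi_d M_z |_{A_d}: for q in C_d[z], M q lies in
   C_d[z] and z q - M q is L-orthogonal to C_d[z] (orthogonal projection
   of z q in A_{d+1} onto A_d). *)
Definition is_compression (L : {poly {poly C}} -> C) (d : nat)
    (M : {poly C} -> {poly C}) : Prop :=
  forall q : {poly C}, (size q <= d.+1)%N ->
    (size (M q) <= d.+1)%N /\
    (forall r : {poly C}, (size r <= d.+1)%N -> ipL L ('X * q - M q) r = 0).

Definition sigmaM (L : {poly {poly C}} -> C) (M : {poly C} -> {poly C})
    (p q : {poly C}) : C :=
  sqnL L p + sqnL L (M q) + 2 * 'Re (ipL L (M p) q).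

End Defs.

(* Main.v *)
Require Import Defs.
From HB Require Import structures.
From mathcomp Require Import all_boot all_order all_algebra zify ring.
Import Order.TTheory GRing.Theory Num.Theory.
Local Open Scope ring_scope.

Module Helpers.
Set Implicit Arguments. Unset Strict Implicit. Unset Printing Implicit Defensive.

Section Gen.
Variable C : numClosedFieldType.
Implicit Types (f g : {poly {poly C}}) (p q : {poly C}).

Lemma bconjE f i j : (bconj f)`_j`_i = (f`_i`_j)^*.
Proof.
rewrite /bconj coef_poly.
case: ifP => hj.
  rewrite coef_poly; case: ifP => // hi.
  by move/negbT: hi; rewrite -leqNgt => /(nth_default 0) ->; rewrite coef0 conjC0.
have : (size (f`_i)%R <= j)%N.
  case: (ltnP i (size f)) => hi.
    have := @leq_bigmax _ (fun k : 'I_(size f) => size (f`_k)) (Ordinal hi).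
    by move/leq_trans; apply; rewrite leqNgt hj.
  by rewrite nth_default // size_poly0.
by move/(nth_default 0) => ->; rewrite coef0 conjC0.
Qed.

Lemma coef_ip p q i j : (p%:P * bconj q%:P)`_j`_i = p`_i * (q`_j)^*.
Proof.
rewrite coefCM.
have -> : (bconj q%:P)`_j = ((q`_j)^*)%:P.
  apply/polyP => k; rewrite bconjE coefC coefC.
  by case: (k == 0%N); rewrite ?coef0 ?conjC0.
by rewrite coefMC.
Qed.

End Gen.

Section LS.
Variable C : numClosedFieldType.
Implicit Types (f g : {poly {poly C}}) (p q : {poly C}).
Variable d : nat.
Variable L : {poly {poly C}} -> C.
Hypothesis Llin : forall (a : C) (f g : {poly {poly C}}),
     tdeg_le (2 * d + 2) f -> tdeg_le (2 * d + 2) g ->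
     L (a%:P%:P * f + g) = a * L f + L g.
Hypothesis Lreal : forall f : {poly {poly C}}, tdeg_le (2 * d + 2) f ->
     L (bconj f) = (L f)^*.

Local Notation n2 := (2 * d + 2)%N.
Local Notation K := (2 * d + 3)%N.

Definition mono (i j : nat) : {poly {poly C}} := ('X^i)%:P * 'X^j.

Lemma coef_mono i j a b : (mono i j)`_b`_a = (a == i)%:R *+ (b == j).
Proof. by rewrite /mono coefCM coefXn mulr_natr coefMn coefXn. Qed.

Lemma tdeg0 n : tdeg_le n (0 : {poly {poly C}}).
Proof. by move=> i j _; rewrite !coef0. Qed.
Arguments tdeg0 n : clear implicits.

Lemma tdegD n f g : tdeg_le n f -> tdeg_le n g -> tdeg_le n (f + g).
Proof. by move=> hf hg i j h; rewrite !coefD hf ?hg ?addr0. Qed.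

Lemma tdegC n c f : tdeg_le n f -> tdeg_le n (c%:P%:P * f).
Proof. by move=> hf i j h; rewrite !coefCM hf ?mulr0. Qed.

Lemma tdeg_sum n (I : Type) (r : seq I) (F : I -> {poly {poly C}}) :
  (forall k, tdeg_le n (F k)) -> tdeg_le n (\sum_(k <- r) F k).
Proof.
move=> h; elim: r => [|x r IH]; first by rewrite big_nil; apply: tdeg0.
by rewrite big_cons; apply: tdegD.
Qed.

Lemma tdeg_mono n i j : (i + j <= n)%N -> tdeg_le n (mono i j).
Proof.
move=> hij a b h; rewrite coef_mono.
case: eqP => [eb|] //; case: eqP => [ea|] //=.
by move: h; rewrite ea eb ltnNge hij.
Qed.

Lemma L0 : L 0 = 0.
Proof.
have := Llin 1 (tdeg0 n2) (tdeg0 n2).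
rewrite mulr0 add0r mul1r => /eqP.
by rewrite -subr_eq0 opprD addrA subrr add0r oppr_eq0 => /eqP.
Qed.

Lemma LC c f : tdeg_le n2 f -> L (c%:P%:P * f) = c * L f.
Proof.
move=> hf; have := Llin c hf (tdeg0 n2).
by rewrite !addr0 L0 addr0.
Qed.

Lemma LD f g : tdeg_le n2 f -> tdeg_le n2 g -> L (f + g) = L f + L g.
Proof. by move=> hf hg; have := Llin 1 hf hg; rewrite !polyC1 !mul1r. Qed.

Lemma Lsum (I : Type) (r : seq I) (F : I -> {poly {poly C}}) :
  (forall k, tdeg_le n2 (F k)) -> L (\sum_(k <- r) F k) = \sum_(k <- r) L (F k).
Proof.
move=> h; elim: r => [|x r IH]; first by rewrite !big_nil L0.
by rewrite !big_cons LD ?IH //; apply: tdeg_sum.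
Qed.

Lemma poly_trunc (R : nzRingType) (n : nat) (p : {poly R}) :
  (size p <= n)%N -> p = \sum_(i < n) p`_i *: 'X^i.
Proof.
move=> h; rewrite -poly_def; apply/polyP => k; rewrite coef_poly.
case: ltnP => // hk; rewrite nth_default //; exact: leq_trans h hk.
Qed.

Lemma tdeg_size f : tdeg_le n2 f -> (size f <= K)%N /\ forall j, (size (f`_j)%R <= K)%N.
Proof.
move=> h; split.
  rewrite leqNgt; apply/negP => hs.
  have : f`_(size f).-1 != 0.
    by rewrite -lead_coefE lead_coef_eq0 -size_poly_gt0 (leq_trans _ hs).
  apply/negP; rewrite negbK; apply/eqP/polyP => i; rewrite coef0 h //.
  by move: hs; lia.
move=> j; rewrite leqNgt; apply/negP => hs.
have : f`_j`_(size f`_j).-1 != 0.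
  by rewrite -lead_coefE lead_coef_eq0 -size_poly_gt0 (leq_trans _ hs).
apply/negP; rewrite negbK h //.
by move: hs; lia.
Qed.

Lemma decomp f : tdeg_le n2 f ->
  f = \sum_(j < K) \sum_(i < K) (f`_j`_i)%:P%:P * mono i j.
Proof.
move=> /tdeg_size [hf hfj].
rewrite {1}(poly_trunc hf); apply: eq_bigr => j _.
rewrite {1}(poly_trunc (hfj j)) -mul_polyC raddf_sum mulr_suml.
apply: eq_bigr => i _; rewrite /mono -mul_polyC /=.
by rewrite polyCM mulrA.
Qed.


Definition mm (i j : nat) : C := if (i + j <= n2)%N then L (mono i j) else 0.

Lemma term_eq f j i : tdeg_le n2 f ->
  tdeg_le n2 ((f`_j`_i)%:P%:P * mono i j) /\
  L ((f`_j`_i)%:P%:P * mono i j) = f`_j`_i * mm i j.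
Proof.
move=> hf; rewrite /mm; case: leqP => hij.
  by split; [apply: tdegC; apply: tdeg_mono | apply: LC; apply: tdeg_mono].
rewrite hf //.
by rewrite !polyC0 !mul0r L0; split => //; apply: tdeg0.
Qed.

Lemma Lexp f : tdeg_le n2 f ->
  L f = \sum_(j < K) \sum_(i < K) f`_j`_i * mm i j.
Proof.
move=> hf; rewrite {1}(decomp hf) Lsum; last first.
  by move=> j; apply: tdeg_sum => i; case: (term_eq j i hf).
apply: eq_bigr => j _; rewrite Lsum; last by move=> i; case: (term_eq j i hf).
by apply: eq_bigr => i _; case: (term_eq j i hf).
Qed.

Definition B p q : C := \sum_(j < K) \sum_(i < K) p`_i * (q`_j)^* * mm i j.

Lemma ipB p q : (size p + size q <= n2 + 2)%N -> ipL L p q = B p q.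
Proof.
move=> hs; rewrite /ipL Lexp.
  by apply: eq_bigr => j _; apply: eq_bigr => i _; rewrite coef_ip.
move=> i j hij; rewrite coef_ip.
case: (ltnP i (size p)) => hi; last by rewrite nth_default // mul0r.
case: (ltnP j (size q)) => hj; last by rewrite (nth_default 0 hj) conjC0 mulr0.
by move: hs hij hi hj; lia.
Qed.

Lemma bconj_mono i j : bconj (mono i j) = mono j i.
Proof.
apply/polyP => b; apply/polyP => a; rewrite bconjE !coef_mono.
by case: (a == j); case: (b == i); rewrite /= ?conjC0 ?conjC1.
Qed.

Lemma mm_sym i j : mm j i = (mm i j)^*.
Proof.
rewrite /mm addnC; case: leqP => h; last by rewrite conjC0.
by rewrite -Lreal ?bconj_mono //; apply: tdeg_mono.
Qed.

Lemma BDl p p' q : B (p + p') q = B p q + B p' q.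
Proof.
rewrite /B -big_split; apply: eq_bigr => j _; rewrite -big_split.
by apply: eq_bigr => i _; rewrite coefD !mulrDl.
Qed.

Lemma BZl c p q : B (c *: p) q = c * B p q.
Proof.
rewrite /B mulr_sumr; apply: eq_bigr => j _; rewrite mulr_sumr.
by apply: eq_bigr => i _; rewrite coefZ !mulrA.
Qed.

Lemma Bsym p q : B q p = (B p q)^*.
Proof.
rewrite /B rmorph_sum exchange_big /=; apply: eq_bigr => j _.
rewrite rmorph_sum; apply: eq_bigr => i _.
by rewrite !rmorphM /= conjCK -mm_sym (mulrC q`_j).
Qed.

Lemma BDr p q q' : B p (q + q') = B p q + B p q'.
Proof. by rewrite Bsym BDl rmorphD /= -!Bsym. Qed.

Lemma BZr c p q : B p (c *: q) = c^* * B p q.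
Proof. by rewrite Bsym BZl rmorphM /= -!Bsym. Qed.

Lemma B0l q : B 0 q = 0.
Proof. by have := BZl 0 0 q; rewrite scale0r mul0r. Qed.

Lemma B0r p : B p 0 = 0.
Proof. by have := BZr 0 p 0; rewrite scale0r conjC0 mul0r. Qed.

Lemma BNl p q : B (- p) q = - B p q.
Proof. by rewrite -scaleN1r BZl mulN1r. Qed.

Lemma BNr p q : B p (- q) = - B p q.
Proof. by rewrite -scaleN1r BZr rmorphN1 mulN1r. Qed.

Lemma BBl p p' q : B (p - p') q = B p q - B p' q.
Proof. by rewrite BDl BNl. Qed.

Lemma BBr p q q' : B p (q - q') = B p q - B p q'.
Proof. by rewrite BDr BNr. Qed.

Lemma B_suml (I : Type) (r : seq I) (F : I -> {poly C}) q :
  B (\sum_(k <- r) F k) q = \sum_(k <- r) B (F k) q.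
Proof.
elim: r => [|x r IH]; first by rewrite !big_nil B0l.
by rewrite !big_cons BDl IH.
Qed.

Lemma B_sumr (I : Type) (r : seq I) (F : I -> {poly C}) p :
  B p (\sum_(k <- r) F k) = \sum_(k <- r) B p (F k).
Proof.
elim: r => [|x r IH]; first by rewrite !big_nil B0r.
by rewrite !big_cons BDr IH.
Qed.

End LS.

Section Main.
Variable C : numClosedFieldType.
Implicit Types (f g : {poly {poly C}}) (p q r u : {poly C}).
Variable d : nat.
Variable L : {poly {poly C}} -> C.
Hypothesis Llin : forall (a : C) (f g : {poly {poly C}}),
     tdeg_le (2 * d + 2) f -> tdeg_le (2 * d + 2) g ->
     L (a%:P%:P * f + g) = a * L f + L g.
Hypothesis Lreal : forall f : {poly {poly C}}, tdeg_le (2 * d + 2) f ->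
     L (bconj f) = (L f)^*.
Hypothesis Lstrict : forall p : {poly C}, (size p <= d.+1)%N -> p != 0 ->
     0 < L (p%:P * bconj p%:P).
Variable M : {poly C} -> {poly C}.
Hypothesis HM : is_compression L d M.

Local Notation B := (B d L).
Local Notation V p := (size (p)%R <= d.+1)%N.

Lemma ipB' p q : (size p + size q <= 2 * d + 4)%N -> ipL L p q = B p q.
Proof. by move=> h; apply: ipB => //; rewrite (leq_trans h) //; lia. Qed.

Lemma Bpos p : V p -> p != 0 -> 0 < B p p.
Proof. by move=> hp hp0; rewrite -ipB'; [apply: Lstrict | lia]. Qed.

Lemma Bge0 p : V p -> 0 <= B p p.
Proof.
move=> hp; case: (eqVneq p 0) => [->|hp0]; first by rewrite B0l.
exact/ltW/Bpos.
Qed.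

Lemma Bdef p : V p -> B p p = 0 -> p = 0.
Proof.
move=> hp h; apply/eqP; apply/negPn/negP => hp0.
by have := Bpos hp hp0; rewrite h ltxx.
Qed.

Lemma sizeXM q : V q -> (size ('X * q - M q)%R <= d.+2)%N.
Proof.
move=> hq; case: (HM hq) => hMq _.
rewrite (leq_trans (size_polyD _ _)) // geq_max size_polyN (leq_trans hMq) // andbT.
by rewrite (leq_trans (size_polyMleq _ _)) // size_polyX; lia.
Qed.

Lemma HMB q r : V q -> V r -> B ('X * q - M q) r = 0.
Proof.
move=> hq hr; case: (HM hq) => _ h; rewrite -(h r hr) ipB' //.
by have := sizeXM hq; lia.
Qed.

Lemma MV q : V q -> V (M q).
Proof. by move=> hq; case: (HM hq). Qed.

Lemma size_drop1 p n : (size p <= n.+1)%N -> p`_n = 0 -> (size p <= n)%N.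
Proof.
move=> h1 h2; rewrite leq_eqVlt in h1; case/orP: h1 => [/eqP hs|]; last by [].
have : lead_coef p = 0 by rewrite lead_coefE hs.
by move/eqP; rewrite lead_coef_eq0 => /eqP ->; rewrite size_poly0.
Qed.

Definition P := 'X^(d.+1) - M 'X^d.

Lemma P_orth r : V r -> B P r = 0.
Proof. by move=> hr; rewrite /P exprS HMB // size_polyXn. Qed.

Lemma P_orth' r : V r -> B r P = 0.
Proof. by move=> hr; rewrite (Bsym Lreal) P_orth // conjC0. Qed.

Lemma size_P : size P = d.+2.
Proof.
rewrite /P size_polyDl size_polyXn // size_polyN ltnS; apply: MV.
by rewrite size_polyXn.
Qed.

Lemma P_monic : P \is monic.
Proof.
rewrite monicE /P lead_coefDl ?lead_coefXn //.
by rewrite size_polyN size_polyXn ltnS; apply: MV; rewrite size_polyXn.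
Qed.

Lemma P_neq0 : P != 0.
Proof. by rewrite -size_poly_gt0 size_P. Qed.

Lemma coefP_top : P`_d.+1 = 1.
Proof. by have := P_monic; rewrite monicE lead_coefE size_P => /eqP. Qed.

Lemma Mform q : V q -> M q = 'X * q - q`_d *: P.
Proof.
move=> hq.
set e := 'X * q - M q - q`_d *: P.
have he : V e.
  apply: size_drop1.
    rewrite (leq_trans (size_polyD _ _)) // geq_max sizeXM // size_polyN.
    by rewrite (leq_trans (size_scale_leq _ _)) // size_P.
  rewrite /e !coefB coefZ coefP_top coefXM /= mulr1.
  have -> : (M q)`_d.+1 = 0 by rewrite nth_default // (leq_trans (MV hq)).
  by rewrite subr0 subrr.
have : B e e = 0.
  by rewrite /e BBl BZl HMB // P_orth // mulr0 subr0.
move/(Bdef he); rewrite /e => /eqP; rewrite subr_eq0 => /eqP h.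
by rewrite -h opprB addrC subrK.
Qed.


Lemma VD p q : V p -> V q -> V (p + q).
Proof. by move=> hp hq; rewrite (leq_trans (size_polyD _ _)) // geq_max hp hq. Qed.

Lemma VN p : V p -> V (- p).
Proof. by rewrite size_polyN. Qed.

Lemma VZ c p : V p -> V (c *: p).
Proof. by move=> hp; rewrite (leq_trans (size_scale_leq _ _)). Qed.

Lemma VB p q : V p -> V q -> V (p - q).
Proof. by move=> hp hq; apply: VD => //; apply: VN. Qed.

Lemma Mlin t s p u : V p -> V u -> M (t *: p - s *: u) = t *: M p - s *: M u.
Proof.
move=> hp hu; rewrite !Mform ?VB ?VZ // coefB !coefZ.
rewrite -!mul_polyC polyCB !polyCM; ring.
Qed.

Lemma Breal u : (B u u)^* = B u u.
Proof. by rewrite -(Bsym Lreal). Qed.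

Lemma sig_shift p u a t : V p -> V u -> M u = a *: u ->
  let p' := t *: p - a^* *: u in
  B p' p' + B (M u) (M u) + (B (M p') u + (B (M p') u)^*) =
  t * t^* * B p p + (t * B (M p - a *: p) u + (t * B (M p - a *: p) u)^*).
Proof.
move=> hp hu hMu p'; rewrite /p' Mlin // hMu.
rewrite !(BDl, BNl, BZl, BDr Lreal, BNr Lreal, BZr Lreal) ?conjCK.
rewrite !(rmorphN, rmorphM, rmorphD) /= ?conjCK ?Breal.
rewrite [B u p](Bsym Lreal) ?conjCK.
ring.
Qed.


Lemma Re2 (z : C) : 2 * 'Re z = z + z^*.
Proof.
rewrite ReE mulrC -mulrA mulVf ?mulr1 //.
by rewrite pnatr_eq0.
Qed.

Lemma sigmaB p q : V p -> V q ->
  sigmaM L M p q = B p p + B (M q) (M q) + (B (M p) q + (B (M p) q)^*).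
Proof.
move=> hp hq; have hMp := MV hp; have hMq := MV hq.
rewrite /sigmaM /sqnL Re2 !ipB' //; lia.
Qed.

Hypothesis Hsig : forall p q, V p -> V q -> 0 <= sigmaM L M p q.

Lemma eig_adj u a : V u -> M u = a *: u -> forall p, V p -> B (M p - a *: p) u = 0.
Proof.
move=> hu hMu p hp.
set w := B (M p - a *: p) u; set be := B p p.
have H t : 0 <= t * t^* * be + (t * w + (t * w)^*).
  have hp' : V (t *: p - a^* *: u) by apply: VB; apply: VZ.
  have := Hsig hp' hu.
  by rewrite sigmaB // sig_shift.
have hbe : 0 <= be by apply: Bge0.
have hbe1 : 0 < be + 1 by rewrite addrC ltr_wpDr.
set s := (be + 1)^-1.
have hs : 0 < s by rewrite invr_gt0.
have hsc : s^* = s by rewrite conj_Creal // gtr0_real.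
have hbec : be^* = be by rewrite /be Breal.
set n := w * w^*.
have hn : 0 <= n by apply: mul_conjC_ge0.
have := H (- (w^* * s)).
have -> : - (w^* * s) * (- (w^* * s))^* * be + (- (w^* * s) * w + (- (w^* * s) * w)^*)
   = s * s * (- (n * (be + 2%:R))).
  rewrite !(rmorphN, rmorphM) /= conjCK hsc /n /s.
  field; by rewrite gt_eqF.
rewrite pmulr_rge0 ?mulr_gt0 // oppr_ge0 => hle.
have : n * (be + 2%:R) = 0.
  apply/eqP; rewrite eq_le hle mulr_ge0 //.
  by rewrite addr_ge0.
move/eqP; rewrite mulf_eq0 => /orP [|].
  by rewrite /n mul_conjC_eq0 => /eqP.
by rewrite gt_eqF // ltr_wpDl.
Qed.


Lemma notuniq_perm (T : eqType) (s : seq T) : ~~ uniq s ->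
  exists a s', perm_eq s (a :: a :: s').
Proof.
elim: s => [//|x s IH] /=; rewrite negb_and negbK => /orP [hx|hs].
  exists x, (rem x s); rewrite perm_cons; exact: perm_to_rem.
have [a [s' hp]] := IH hs; exists a, (x :: s').
apply: (@perm_trans _ (x :: a :: a :: s')); first by rewrite perm_cons.
apply/permP => Q /=; lia.
Qed.

Lemma P_split : exists rs, P = \prod_(z <- rs) ('X - z%:P) /\ size rs = d.+1.
Proof.
have [rs hrs] := closed_field_poly_normal P.
exists rs; have hP : P = \prod_(z <- rs) ('X - z%:P).
  by rewrite {1}hrs (eqP P_monic) scale1r.
split => //; have := size_P; rewrite hP size_prod_XsubC; by case.
Qed.

Lemma rs_uniq rs : P = \prod_(z <- rs) ('X - z%:P) -> size rs = d.+1 -> uniq rs.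
Proof.
move=> hP hsz; apply/negPn/negP => /notuniq_perm [a [s' hperm]].
set R := \prod_(z <- s') ('X - z%:P).
have hsR : size R = d by rewrite size_prod_XsubC; have := perm_size hperm; rewrite hsz /=; case.
have hPR : P = ('X - a%:P) * (('X - a%:P) * R) by rewrite hP (perm_big _ hperm) !big_cons.
set u := ('X - a%:P) * R.
have hue : u = \prod_(z <- a :: s') ('X - z%:P) by rewrite big_cons.
have umon : u \is monic by rewrite hue monic_prod_XsubC.
have hsu : size u = d.+1.
  by rewrite hue size_prod_XsubC /= -hsR size_prod_XsubC.
have hu : V u by rewrite hsu.
have hR : V R by rewrite hsR.
have hud : u`_d = 1 by have := umon; rewrite monicE lead_coefE hsu => /eqP.
have hRd : R`_d = 0 by rewrite nth_default // hsR.
have hMu : M u = a *: u.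
  rewrite Mform // hud scale1r hPR -!mul_polyC; rewrite /u; ring.
have := eig_adj hu hMu hR.
rewrite Mform // hRd scale0r subr0 -mul_polyC.
have -> : 'X * R - a%:P * R = u by rewrite /u; ring.
move/(Bdef hu)/eqP; apply/negP.
by rewrite -size_poly_gt0 hsu.
Qed.


Section Roots.
Variable rs : seq C.
Hypothesis hP : P = \prod_(z <- rs) ('X - z%:P).
Hypothesis hsz : size rs = d.+1.
Let huniq := rs_uniq hP hsz.

Definition ak (k : 'I_d.+1) : C := nth 0 rs k.
Definition ell (k : 'I_d.+1) : {poly C} :=
  \prod_(j < d.+1 | j != k) ('X - (ak j)%:P).

Lemma Pprod : P = \prod_(k < d.+1) ('X - (ak k)%:P).
Proof. by rewrite hP (big_nth 0) hsz big_mkord. Qed.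

Lemma P_ell k : P = ('X - (ak k)%:P) * ell k.
Proof. by rewrite Pprod (bigD1 k). Qed.

Lemma ak_inj j k : j != k -> ak j != ak k.
Proof. by move=> hjk; rewrite /ak nth_uniq ?hsz. Qed.

Lemma ell_root j k : j != k -> (ell k).[ak j] = 0.
Proof.
by move=> hjk; rewrite /ell (bigD1 j) //= hornerM hornerXsubC subrr mul0r.
Qed.

Lemma ell_nz k : (ell k).[ak k] != 0.
Proof.
rewrite /ell horner_prod; apply/prodf_neq0 => j hj.
by rewrite hornerXsubC subr_eq0 eq_sym ak_inj.
Qed.

Lemma ell_size k : size (ell k) = d.+1.
Proof.
have hne : ell k != 0 by apply/eqP => h; move: (ell_nz k); rewrite h horner0 eqxx.
have := size_P; rewrite (P_ell k) size_mul ?polyXsubC_eq0 // size_XsubC.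
by case.
Qed.

Lemma ell_top k : (ell k)`_d = 1.
Proof.
by have := monic_prod_XsubC (index_enum 'I_d.+1) (fun j => j != k) ak;
  rewrite monicE lead_coefE -/(ell k) ell_size => /eqP.
Qed.

Lemma ellV k : V (ell k).
Proof. by rewrite ell_size. Qed.

Lemma M_ell k : M (ell k) = ak k *: ell k.
Proof.
rewrite Mform ?ellV // ell_top scale1r (P_ell k) -mul_polyC; ring.
Qed.

Lemma ell_orth j k : j != k -> B (ell j) (ell k) = 0.
Proof.
move=> hjk; have := eig_adj (ellV k) (M_ell k) (ellV j).
rewrite M_ell -scalerBl BZl => /eqP; rewrite mulf_eq0 subr_eq0 (negbTE (ak_inj hjk)) /=.
by move/eqP.
Qed.

Lemma Vsum (I : Type) (r : seq I) (F : I -> {poly C}) :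
  (forall i, V (F i)) -> V (\sum_(i <- r) F i).
Proof.
move=> h; elim: r => [|x r IH]; first by rewrite big_nil size_poly0.
by rewrite big_cons; apply: VD.
Qed.

Lemma interp p : V p -> p = \sum_(k < d.+1) (p.[ak k] / (ell k).[ak k]) *: ell k.
Proof.
move=> hp; apply/eqP; rewrite -subr_eq0; apply/eqP.
set e := _ - _.
have he : V e by apply: VB => //; apply: Vsum => k; apply: VZ; apply: ellV.
have hroot j : e.[ak j] = 0.
  rewrite /e hornerD hornerN horner_sum (bigD1 j) //= big1 ?addr0.
    by rewrite hornerZ divfK ?subrr // ell_nz.
  by move=> k hkj; rewrite hornerZ (ell_root (j:=j)) ?mulr0 // eq_sym.
case: (eqVneq e 0) => // hne.
have : (size rs < size e)%N.
  apply: (max_poly_roots hne _ huniq); apply/allP => z hz.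
  have hi : (index z rs < d.+1)%N by rewrite -hsz index_mem.
  by apply/eqP; have := hroot (Ordinal hi); rewrite /ak /= nth_index.
by rewrite hsz ltnNge he.
Qed.

Definition cw (k : 'I_d.+1) : C :=
  B (ell k) (ell k) / ((ell k).[ak k] * ((ell k).[ak k])^*).

Lemma cw_pos k : 0 < cw k.
Proof.
apply: divr_gt0; first by apply: Bpos; [apply: ellV | apply/eqP => h; move: (ell_nz k); rewrite h horner0 eqxx].
by rewrite mul_conjC_gt0 ell_nz.
Qed.

Lemma quad p q : V p -> V q ->
  B p q = \sum_(k < d.+1) cw k * p.[ak k] * (q.[ak k])^*.
Proof.
move=> hp hq; rewrite {1}(interp hp) {1}(interp hq) B_suml.
apply: eq_bigr => k _; rewrite BZl (B_sumr Lreal) (bigD1 k) //= big1 ?addr0; last first.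
  by move=> j hjk; rewrite (BZr Lreal) ell_orth ?mulr0 // eq_sym.
rewrite (BZr Lreal) /cw fmorph_div /=.
have h1 := ell_nz k.
have h2 : ((ell k).[ak k])^* != 0 by rewrite conjC_eq0.
field; by rewrite h1 h2.
Qed.

End Roots.

Definition red p := p - p`_d.+1 *: P.

Lemma Vred p : (size p <= d.+2)%N -> V (red p).
Proof.
move=> hp; apply: size_drop1.
  rewrite (leq_trans (size_polyD _ _)) // geq_max hp size_polyN.
  by rewrite (leq_trans (size_scale_leq _ _)) // size_P.
by rewrite coefB coefZ coefP_top mulr1 subrr.
Qed.

Lemma red_eq p : p = red p + p`_d.+1 *: P.
Proof. by rewrite /red subrK. Qed.

Lemma b_to_a : exists (N : nat) (a : 'I_N -> C) (c : 'I_N -> C),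
     (N <= d.+1)%N /\ (forall k, 0 < c k) /\
     forall p q : {poly C}, (size p <= d.+2)%N -> (size q <= d.+2)%N ->
       ((size p).-1 + (size q).-1 <= 2 * d + 1)%N ->
       L (p%:P * bconj q%:P) = \sum_(k < N) c k * p.[a k] * (q.[a k])^*.
Proof.
have [rs [hP hsz]] := P_split.
exists d.+1, (ak rs), (cw rs); split => //; split; first by move=> k; apply: cw_pos.
move=> p q hp hq hpq.
have hPa k : P.[ak rs k] = 0 by rewrite (P_ell hP hsz k) hornerM hornerXsubC subrr mul0r.
have hred r k : (red r).[ak rs k] = r.[ak rs k].
  by rewrite /red hornerD hornerN hornerZ hPa mulr0 subr0.
rewrite -/(ipL L p q) ipB'; last by move: hp hq hpq; lia.
case: (leqP (size p) d.+1) => hp'.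
  rewrite [q in B p q]red_eq (BDr Lreal) (BZr Lreal) P_orth' // mulr0 addr0.
  rewrite (quad hP hsz) //; last by apply: Vred.
  by apply: eq_bigr => k _; rewrite hred.
have hq' : V q by move: hp hp' hpq; lia.
rewrite [p in B p q]red_eq BDl BZl P_orth // mulr0 addr0.
rewrite (quad hP hsz) //; last by apply: Vred.
by apply: eq_bigr => k _; rewrite hred.
Qed.


Lemma a_to_b (N : nat) (a : 'I_N -> C) (c : 'I_N -> C) :
  (N <= d.+1)%N -> (forall k, 0 < c k) ->
  (forall p q : {poly C}, (size p <= d.+2)%N -> (size q <= d.+2)%N ->
       ((size p).-1 + (size q).-1 <= 2 * d + 1)%N ->
       L (p%:P * bconj q%:P) = \sum_(k < N) c k * p.[a k] * (q.[a k])^*) ->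
  forall p q, V p -> V q -> 0 <= sigmaM L M p q.
Proof.
move=> hN hc hQ0.
have hQ p q : (size p <= d.+2)%N -> (size q <= d.+2)%N ->
       ((size p).-1 + (size q).-1 <= 2 * d + 1)%N ->
       B p q = \sum_(k < N) c k * p.[a k] * (q.[a k])^*.
  move=> hp hq hpq; rewrite -hQ0 // -/(ipL L p q) ipB' //; move: hp hq hpq; lia.
move=> p q hp hq.
have hw := MV hq.
set w := M q.
have hwa k : w.[a k] = a k * q.[a k].
  set g := 'X * q - w.
  have hg : (size g <= d.+2)%N by apply: sizeXM.
  set Pi := \prod_(z <- [seq a k | k <- enum 'I_N]) ('X - z%:P).
  have hPi : Pi != 0 by rewrite -size_poly_gt0 size_prod_XsubC.
  have hr : V (g %% Pi).
    have := ltn_modpN0 g hPi; rewrite size_prod_XsubC size_map size_enum_ord.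
    by move: hN; lia.
  have hra j : (g %% Pi).[a j] = g.[a j].
    apply: horner_mod; rewrite root_prod_XsubC; apply: map_f; exact: mem_enum.
  have := HMB hq hr; rewrite -/g hQ; first last.
  - by move: (size g) (size (g %% Pi)) hg hr => x y; lia.
  - by rewrite (leq_trans hr).
  - by [].
  under eq_bigr => j _ do rewrite hra -mulrA.
  have hnn : forall j : 'I_N, true -> 0 <= c j * (g.[a j] * g.[a j]^*).
    by move=> j _; apply: mulr_ge0; [apply: ltW | apply: mul_conjC_ge0].
  move/(psumr_eq0P hnn) => h.
  have /eqP := h k isT; rewrite mulf_eq0 gt_eqF ?hc //= mul_conjC_eq0.
  rewrite /g hornerD hornerN mulrC hornerMX subr_eq0 => /eqP <-.
  by rewrite mulrC.
rewrite sigmaB //.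
have hXp : (size ('X * p)%R <= d.+2)%N.
  by rewrite (leq_trans (size_polyMleq _ _)) // size_polyX; move: hp; lia.
have -> : B (M p) q = B ('X * p) q.
  by have := HMB hp hq; rewrite BBl => /eqP; rewrite subr_eq0 => /eqP.
rewrite !hQ; try by move: hp hq hw hXp; lia.
rewrite rmorph_sum -!big_split /=; apply: sumr_ge0 => k _.
have hcc : (c k)^* = c k by rewrite conj_Creal // gtr0_real.
have -> : c k * p.[a k] * (p.[a k])^* + c k * w.[a k] * (w.[a k])^* +
    (c k * ('X * p).[a k] * (q.[a k])^* + (c k * ('X * p).[a k] * (q.[a k])^*)^*)
  = c k * ((p.[a k] + (a k)^* * q.[a k]) * (p.[a k] + (a k)^* * q.[a k])^*).
  rewrite hwa (mulrC 'X) hornerMX !(rmorphM, rmorphD) /= hcc !conjCK; ring.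
by apply: mulr_ge0; [apply: ltW | apply: mul_conjC_ge0].
Qed.

End Main.

End Helpers.

Theorem theorem3 (C : numClosedFieldType) (d : nat)
  (L : {poly {poly C}} -> C)
  (* L is linear on C_{2d+2}[z, zbar] *)
  (Llin : forall (a : C) (f g : {poly {poly C}}),
     tdeg_le (2 * d + 2) f -> tdeg_le (2 * d + 2) g ->
     L (a%:P%:P * f + g) = a * L f + L g)
  (* L is real *)
  (Lreal : forall f : {poly {poly C}}, tdeg_le (2 * d + 2) f ->
     L (bconj f) = (L f)^*)
  (* L is non-negative on real squares *)
  (Lpos : forall f : {poly {poly C}}, tdeg_le d.+1 f ->
     0 <= L (f * bconj f))
  (* L is strictly positive on hermitian squares of bidegree <= (d,d) *)
  (Lstrict : forall p : {poly C}, (size p <= d.+1)%N -> p != 0 ->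
     0 < L (p%:P * bconj p%:P))
  (M : {poly C} -> {poly C}) (HM : is_compression L d M) :
  (exists (N : nat) (a : 'I_N -> C) (c : 'I_N -> C),
     (N <= d.+1)%N /\ (forall k, 0 < c k) /\
     forall p q : {poly C}, (size p <= d.+2)%N -> (size q <= d.+2)%N ->
       ((size p).-1 + (size q).-1 <= 2 * d + 1)%N ->
       L (p%:P * bconj q%:P) = \sum_(k < N) c k * p.[a k] * (q.[a k])^*)
  <->
  (forall p q : {poly C}, (size p <= d.+1)%N -> (size q <= d.+1)%N ->
     0 <= sigmaM L M p q).
Proof.
split.
- move=> [N [a [c [hN [hc hQ]]]]].
  exact: (Helpers.a_to_b Llin HM hN hc hQ).
- move=> Hsig; eapply Helpers.b_to_a; eassumption.
Qed.
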